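(* Let $\mathcal D$ be universal, $\mathrm M=(M,d)\in\mathfrak U_{\mathcal D}$, $A\subseteq M$ finite and nonempty, and $\mathfrak s,\mathfrak t$ Katětov functions of $\mathrm M$ with $\operatorname{dom}(\mathfrak s)=\operatorname{dom}(\mathfrak t)=A$. Then $$d(\mathfrak s,\mathfrak t)=\Big\{m\in\mathcal D:\ \max_{x\in A}|\mathfrak s(x)-\mathfrak t(x)|\le m\le\min_{x\in A}\big(\mathfrak s(x)+\mathfrak t(x)\big)\Big\}.$$
   Context: $\mathcal D$ is a finite subset of $\mathbb R_{\ge0}$ containing $0$. $\mathfrak U_{\mathcal D}$ is the class of countable homogeneous metric spaces (every isometry between finite subspaces extends to an isometry of the space onto itself) with distance set exactly $\mathcal D$ into which every finite metric space with distances in $\mathcal D$ embeds isometrically; $\mathcal D$ is universal if this class is nonempty. A Katětov function of $\mathrm M$ is a map $\mathfrak t:F\to\mathcal D\setminus\{0\}$, $F\subseteq M$ finite, with $|\mathfrak t(x)-\mathfrak t(y)|\le d(x,y)\le\mathfrak t(x)+\mathfrak t(y)$ for all $x,y\in F$; $\operatorname{orb}(\mathfrak t)=\{y\in M\setminus F: d(y,x)=\mathfrak t(x)\ \forall x\in F\}$. For Katětov functions $\mathfrak s,\mathfrak t$: $d(\mathfrak s,\mathfrak t)=\{d(x,y): x\in\operatorname{orb}(\mathfrak s),\ y\in\operatorname{orb}(\mathfrak t)\}$. *)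

(* Defs.v *)
From Stdlib Require Import Reals List.
Import ListNotations.
Open Scope R_scope.

Definition valid_distset (D : list R) : Prop :=
  In 0 D /\ (forall m, In m D -> 0 <= m).

Definition is_metric {X : Type} (d : X -> X -> R) : Prop :=
  (forall x y, d x y = 0 <-> x = y) /\
  (forall x y, d x y = d y x) /\
  (forall x y z, d x z <= d x y + d y z).

Definition dists_in (D : list R) {X : Type} (d : X -> X -> R) : Prop :=
  forall x y, In (d x y) D.

Definition distset_exactly (D : list R) {X : Type} (d : X -> X -> R) : Prop :=
  dists_in D d /\ (forall m, In m D -> exists x y, d x y = m).

Definition countable_type (X : Type) : Prop :=
  exists f : X -> nat, forall x y, f x = f y -> x = y.

Definition finite_type (X : Type) : Prop :=
  exists l : list X, forall x, In x l.

(* every isometry between finite subspaces (domain F, map f restricted to F)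
   extends to an isometry of the space onto itself *)
Definition homogeneous {X : Type} (d : X -> X -> R) : Prop :=
  forall (F : list X) (f : X -> X),
    (forall x y, In x F -> In y F -> d (f x) (f y) = d x y) ->
    exists g : X -> X,
      (exists h : X -> X, forall x, h (g x) = x /\ g (h x) = x) /\
      (forall x y, d (g x) (g y) = d x y) /\
      (forall x, In x F -> g x = f x).

Definition embeds_all_finite (D : list R) {X : Type} (d : X -> X -> R) : Prop :=
  forall (Y : Type) (e : Y -> Y -> R),
    finite_type Y -> is_metric e -> dists_in D e ->
    exists f : Y -> X, forall y1 y2, d (f y1) (f y2) = e y1 y2.

Definition in_UD (D : list R) (X : Type) (d : X -> X -> R) : Prop :=
  countable_type X /\ is_metric d /\ homogeneous d /\
  distset_exactly D d /\ embeds_all_finite D d.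

Definition universal (D : list R) : Prop :=
  exists (X : Type) (d : X -> X -> R), in_UD D X d.

Definition katetov (D : list R) {X : Type} (d : X -> X -> R)
  (A : list X) (t : X -> R) : Prop :=
  (forall x, In x A -> In (t x) D /\ t x <> 0) /\
  (forall x y, In x A -> In y A ->
     Rabs (t x - t y) <= d x y /\ d x y <= t x + t y).

Definition orb {X : Type} (d : X -> X -> R) (A : list X) (t : X -> R) (y : X) : Prop :=
  ~ In y A /\ (forall x, In x A -> d y x = t x).

Definition in_kat_dist {X : Type} (d : X -> X -> R) (A : list X)
  (s t : X -> R) (m : R) : Prop :=
  exists x y, orb d A s x /\ orb d A t y /\ d x y = m.

Definition max_over {X : Type} (f : X -> R) (A : list X) : R :=
  match A with
  | [] => 0
  | a :: l => fold_right (fun x r => Rmax (f x) r) (f a) l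
  end.

Definition min_over {X : Type} (f : X -> R) (A : list X) : R :=
  match A with
  | [] => 0
  | a :: l => fold_right (fun x r => Rmin (f x) r) (f a) l
  end.

(* Main.v *)
Require Import Defs.
From Stdlib Require Import Reals List Lra Classical ClassicalEpsilon ProofIrrelevance.
Open Scope R_scope.
Import ListNotations.

Lemma rabs_lin x y c : Rabs (x - y) <= c -> x <= c + y /\ y <= c + x.
Proof. unfold Rabs; destruct (Rcase_abs (x - y)); intros; lra. Qed.

Lemma lin_rabs x y c : x <= c + y -> y <= c + x -> Rabs (x - y) <= c.
Proof. unfold Rabs; destruct (Rcase_abs (x - y)); intros; lra. Qed.

Lemma fold_max_le {X} (f : X -> R) a l m : f a <= m -> (forall x, In x l -> f x <= m) ->
  fold_right (fun x r => Rmax (f x) r) (f a) l <= m.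
Proof. induction l; simpl; intros; auto. apply Rmax_lub; auto. Qed.

Lemma fold_max_ge {X} (f : X -> R) a l x : In x (a :: l) ->
  f x <= fold_right (fun x r => Rmax (f x) r) (f a) l.
Proof. induction l; simpl; intros [H|H]; subst; try lra; try tauto.
  - eapply Rle_trans; [apply IHl; now left | apply Rmax_r].
  - destruct H. subst; apply Rmax_l.
    eapply Rle_trans; [apply IHl; now right | apply Rmax_r]. Qed.

Lemma fold_min_ge {X} (f : X -> R) a l m : m <= f a -> (forall x, In x l -> m <= f x) ->
  m <= fold_right (fun x r => Rmin (f x) r) (f a) l.
Proof. induction l; simpl; intros; auto. apply Rmin_glb; auto. Qed.

Lemma fold_min_le {X} (f : X -> R) a l x : In x (a :: l) ->
  fold_right (fun x r => Rmin (f x) r) (f a) l <= f x.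
Proof. induction l; simpl; intros [H|H]; subst; try lra; try tauto.
  - eapply Rle_trans; [apply Rmin_r | apply IHl; now left].
  - destruct H. subst; apply Rmin_l.
    eapply Rle_trans; [apply Rmin_r | apply IHl; now right]. Qed.

Lemma max_iff {X} (f : X -> R) A m : A <> nil ->
  (max_over f A <= m <-> forall x, In x A -> f x <= m).
Proof. destruct A as [|a l]; [congruence|]; intros _; simpl; split.
  - intros H x Hx; eapply Rle_trans; [apply fold_max_ge; eauto | exact H].
  - intros H; apply fold_max_le. apply H; now left. intros; apply H; now right. Qed.

Lemma min_iff {X} (f : X -> R) A m : A <> nil ->
  (m <= min_over f A <-> forall x, In x A -> m <= f x).
Proof. destruct A as [|a l]; [congruence|]; intros _; simpl; split.
  - intros H x Hx; eapply Rle_trans; [exact H | apply fold_min_le; eauto].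
  - intros H; apply fold_min_ge. apply H; now left. intros; apply H; now right. Qed.

Lemma sig_list {M} (A : list M) : forall l, incl l A ->
  exists L : list {x | In x A}, forall z, In (proj1_sig z) l -> In z L.
Proof.
  induction l as [|a l IH]; intros Hi.
  - exists nil; simpl; tauto.
  - destruct IH as [L HL]. intros x Hx; apply Hi; now right.
    assert (pa : In a A) by (apply Hi; now left).
    exists (exist _ a pa :: L). intros [z pz] [Hz|Hz]; simpl in *.
    + left. subst. f_equal. apply proof_irrelevance.
    + right. apply (HL (exist _ z pz)). exact Hz.
Qed.

Section Ext.
Variables (D : list R) (M : Type) (d : M -> M -> R) (A : list M).
Variables (P : Type) (eP : P -> P -> R) (k : P -> M -> R).

Definition Y := ({x | In x A} + P)%type.
Definition eY (u v : Y) : R :=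
  match u, v with
  | inl a, inl b => d (proj1_sig a) (proj1_sig b)
  | inl a, inr p => k p (proj1_sig a)
  | inr p, inl a => k p (proj1_sig a)
  | inr p, inr q => eP p q
  end.

Lemma extend : in_UD D M d -> (exists Pl, forall p : P, In p Pl) ->
  is_metric eP -> dists_in D eP ->
  (forall p a, In a A -> In (k p a) D /\ k p a <> 0) ->
  (forall p a b, In a A -> In b A -> Rabs (k p a - k p b) <= d a b /\ d a b <= k p a + k p b) ->
  (forall p q a, In a A -> Rabs (k p a - k q a) <= eP p q /\ eP p q <= k p a + k q a) ->
  exists j : P -> M, (forall p q, d (j p) (j q) = eP p q) /\ (forall p, orb d A (k p) (j p)).
Proof.
  intros [_ [[d0 [dsym dtri]] [Hhom [[Hdin _] Hemb]]]] [Pl HPl] [e0 [esym etri]] Hein Hk Hkat Hpq.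
  destruct (Hemb Y eY) as [f Hf].
  - destruct (sig_list A A (incl_refl _)) as [L HL].
    exists (map inl L ++ map inr Pl). intros [z|p]; apply in_or_app.
    + left. apply in_map. apply HL. exact (proj2_sig z).
    + right. apply in_map, HPl.
  - split; [|split].
    + intros [[a pa]|p] [[b pb]|q]; simpl; split; intros H; try congruence.
      all: first [ apply d0 in H; subst; f_equal; f_equal; apply proof_irrelevance
                 | inversion H; subst; apply d0; reflexivity
                 | exfalso; match goal with H: k ?p ?a = 0, pa : In ?a A |- _ => exact (proj2 (Hk p a pa) H) end
                 | apply e0 in H; subst; reflexivity
                 | inversion H; subst; apply e0; reflexivity ].
    + intros [[a pa]|p] [[b pb]|q]; simpl; auto.
    + intros [[a pa]|p] [[b pb]|q] [[c pc]|r]; simpl; auto.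
      all: solve [ match goal with
        | pa: In ?a A, pb: In ?b A, p: P |- _ =>
          let H1 := fresh in let H2 := fresh in
          destruct (Hkat p a b pa pb) as [H1 H2]; apply rabs_lin in H1; lra
        | pa: In ?a A, p: P, q : P |- _ =>
          let H1 := fresh in let H2 := fresh in
          destruct (Hpq p q a pa) as [H1 H2]; apply rabs_lin in H1; lra
        end ].
  - intros [[a pa]|p] [[b pb]|q]; simpl; auto; apply Hk; auto.
  - set (phi := fun x => match excluded_middle_informative (In x A) with
                        | left H => f (inl (exist _ x H)) | right _ => x end).
    destruct (Hhom A phi) as [g [[h Hh] [Hgi Hgext]]].
    { intros x y Hx Hy. unfold phi.
      destruct (excluded_middle_informative (In x A)); [|contradiction].
      destruct (excluded_middle_informative (In y A)); [|contradiction].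
      rewrite Hf. reflexivity. }
    exists (fun p => h (f (inr p))). split.
    + intros p q. rewrite <- Hgi. rewrite (proj2 (Hh _)), (proj2 (Hh _)). rewrite Hf. reflexivity.
    + intros p.
      assert (Hd : forall a, In a A -> d (h (f (inr p))) a = k p a).
      { intros a Ha. rewrite <- Hgi. rewrite (proj2 (Hh _)), Hgext by exact Ha.
        unfold phi. destruct (excluded_middle_informative (In a A)); [|contradiction].
        rewrite Hf. reflexivity. }
      split; auto. intros Hin. apply (proj2 (Hk p _ Hin)). rewrite <- Hd by exact Hin.
      apply d0. reflexivity.
Qed.
End Ext.

Theorem lemma4p1 (D : list R) (M : Type) (d : M -> M -> R)
  (A : list M) (s t : M -> R) :
  valid_distset D -> universal D -> in_UD D M d ->
  A <> nil ->
  katetov D d A s -> katetov D d A t ->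
  forall m : R,
    in_kat_dist d A s t m <->
    (In m D /\
     max_over (fun x => Rabs (s x - t x)) A <= m /\
     m <= min_over (fun x => s x + t x) A).
Proof.
  intros HD _ HM HA [Hs1 Hs2] [Ht1 Ht2] m.
  pose proof HM as [_ [[d0 [dsym dtri]] [_ [[Hdin _] _]]]].
  rewrite max_iff by exact HA. rewrite min_iff by exact HA.
  split.
  - intros [x [y [[_ Hx] [[_ Hy] Hm]]]]. subst m. split; [apply Hdin|split].
    + intros a Ha. apply lin_rabs.
      * rewrite <- (Hx a Ha), <- (Hy a Ha). specialize (dtri x y a). lra.
      * rewrite <- (Hx a Ha), <- (Hy a Ha). specialize (dtri y x a). rewrite (dsym y x) in dtri. lra.
    + intros a Ha. rewrite <- (Hx a Ha), <- (Hy a Ha). rewrite (dsym y a). apply dtri.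
  - intros [HmD [Hlo Hhi]].
    destruct (Req_dec m 0) as [Hm0|Hm0].
    + subst m.
      destruct (extend D M d A unit (fun _ _ => 0) (fun _ => s)) as [j [_ Hj]]; auto.
      * exists [tt]; intros []; now left.
      * split; [intros [] []; split; auto; lra|split; intros; lra].
      * intros [] []; apply HD.
      * intros _ _ a Ha. split; [rewrite Rminus_diag, Rabs_R0; lra|].
        pose proof (proj2 HD (s a) (proj1 (Hs1 a Ha))). lra.
      * exists (j tt), (j tt). split; [apply Hj|split; [|apply d0; reflexivity]].
        destruct (Hj tt) as [Hn Hx]; split; auto. intros a Ha. rewrite Hx by exact Ha.
        specialize (Hlo a Ha). pose proof (Rabs_pos (s a - t a)).
        apply rabs_lin in Hlo. lra.
    + destruct (extend D M d A bool (fun p q => if Bool.eqb p q then 0 else m)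
         (fun p => if p then s else t)) as [j [Hjj Hj]]; auto.
      * exists [true; false]; intros []; simpl; auto.
      * split; [|split].
        -- intros [] []; simpl; split; intros; try lra; try congruence.
        -- intros [] []; reflexivity.
        -- pose proof (proj2 HD m HmD). intros [] [] []; simpl; lra.
      * intros [] []; simpl; auto; apply HD.
      * intros [] a Ha; auto.
      * intros [] a b Ha Hb; auto.
      * pose proof (fun a Ha => proj2 HD (s a) (proj1 (Hs1 a Ha))) as Hsp.
        pose proof (fun a Ha => proj2 HD (t a) (proj1 (Ht1 a Ha))) as Htp.
        intros [] [] a Ha; simpl; rewrite ?Rminus_diag, ?Rabs_R0;
          try (specialize (Hsp a Ha); lra); try (specialize (Htp a Ha); lra);
          split; auto.
        rewrite Rabs_minus_sym; auto.
        rewrite Rplus_comm; auto.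
      * exists (j true), (j false). split; [apply Hj|split; [apply Hj|]].
        rewrite Hjj. reflexivity.
Qed.
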